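(* Let $d\ge 1$ and let $G$ be a twin-free graph with $n$ vertices whose VC-dimension is at most $d$. Then every identifying code $C$ of $G$ satisfies $|C|\ge (n-1)^{1/d}$.
   Context: For $v\in V(G)$, $N[v]$ is the closed neighbourhood of $v$. An identifying code of $G$ is a set $C\subseteq V(G)$ such that $N[v]\cap C\neq\emptyset$ for all $v$ and $N[u]\cap C\neq N[v]\cap C$ for all distinct $u,v$. $G$ is twin-free if no two distinct vertices have the same closed neighbourhood. A set $X\subseteq V(G)$ is shattered if for every $S\subseteq X$ there is a vertex $v$ with $N[v]\cap X=S$; the VC-dimension of $G$ is the largest size of a shattered set. *)

(* Defs.v *)
From mathcomp Require Import all_boot.
Set Implicit Arguments. Unset Strict Implicit. Unset Printing Implicit Defensive.

Definition simple_graph (T : finType) (e : rel T) : Prop :=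
  symmetric e /\ irreflexive e.

Definition cnbh (T : finType) (e : rel T) (v : T) : {set T} :=
  v |: [set u | e v u].

Definition twin_free (T : finType) (e : rel T) : Prop :=
  forall u v : T, u != v -> cnbh e u != cnbh e v.

Definition identifying_code (T : finType) (e : rel T) (C : {set T}) : Prop :=
  (forall v : T, cnbh e v :&: C != set0) /\
  (forall u v : T, u != v -> cnbh e u :&: C != cnbh e v :&: C).

Definition shattered (T : finType) (e : rel T) (X : {set T}) : Prop :=
  forall S : {set T}, S \subset X -> exists v : T, cnbh e v :&: X = S.

Definition vc_dim_le (T : finType) (e : rel T) (d : nat) : Prop :=
  forall X : {set T}, shattered e X -> #|X| <= d.

(* Main.v *)
Require Import Defs.
From mathcomp Require Import all_boot.
From mathcomp Require Import zify.
Set Implicit Arguments. Unset Strict Implicit. Unset Printing Implicit Defensive.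

Definition gb (m d : nat) := if d is 0 then 1 else m ^ d + 1.

Lemma pow_ineq m d : 2 <= d -> m ^ d + m ^ d.-1 + 1 <= m.+1 ^ d.
Proof.
elim: d => [|d IH] // Hd.
case: d IH Hd => [|d] IH Hd //.
case: d IH Hd => [|d] IH _.
  rewrite /= !expnS !expn0; nia.
have := IH isT; rewrite /= !expnS => H; nia.
Qed.

Lemma gb_rec m d : gb m d + (if d is 0 then 0 else gb m d.-1) <= gb m.+1 d.
Proof.
case: d => [|d] //=; case: d => [|d] /=; first by rewrite !expn1; lia.
have := @pow_ineq m (d.+2) isT => /=; lia.
Qed.

Definition shat (T : finType) (F : {set {set T}}) (X : {set T}) :=
  forall S : {set T}, S \subset X -> exists2 B, B \in F & B :&: X = S.

Lemma sauer (T : finType) (n : nat) : forall (d : nat) (A : {set T}) (F : {set {set T}}),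
  #|A| = n -> (forall B, B \in F -> B \subset A) ->
  (forall X : {set T}, X \subset A -> shat F X -> #|X| <= d) -> #|F| <= gb n d.
Proof.
elim: n => [|n IH] d A F HA Hsub Hvc.
  have A0 : A = set0 by apply/eqP; rewrite -cards_eq0 HA.
  have : F \subset [set set0].
    apply/subsetP => B /Hsub; rewrite A0 subset0 => /eqP ->; by rewrite in_set1.
  move/subset_leq_card; rewrite cards1 => H; case: d {Hvc} => //.
  move=> d /=; rewrite exp0n //; lia.
have : 0 < #|A| by rewrite HA.
case/card_gt0P => x xA.
set A' := A :\ x.
have HA' : #|A'| = n by move: HA; rewrite (cardsD1 x A) xA add1n => -[].
set F1 := [set B :\ x | B in F].
set F2 := [set B in F | (x \notin B) && (x |: B \in F)].
have HF : #|F| <= #|F1| + #|F2|.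
  rewrite -(cardsID F2 F).
  have -> : F :&: F2 = F2.
    by apply/setIidPr/subsetP => B; rewrite inE => /andP [].
  rewrite addnC leq_add2r.
  have Hinj : {in F :\: F2 &, injective (fun B => B :\ x)}.
  move=> B B'; rewrite !in_setD => /andP [nB BF] /andP [nB' B'F] Heq.
  have key : forall B B', B \in F -> B' \in F -> x \notin B -> x \in B' ->
     B :\ x = B' :\ x -> B \in F2.
    move=> C C' CF C'F nC C'x E; rewrite inE CF nC /=.
    have -> : x |: C = C'.
      apply/setP => y; rewrite in_setU1; case: (eqVneq y x) => [->|ne] //=.
      move/setP: E => /(_ y); by rewrite !inE ne.
    done.
  case: (boolP (x \in B)) => xB; case: (boolP (x \in B')) => xB'.
  - apply/setP => y; case: (eqVneq y x) => [->|ne]; first by rewrite xB xB'.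
    move/setP: Heq => /(_ y); by rewrite !inE ne.
  - by move: nB'; rewrite (key B' B B'F BF xB' xB (esym Heq)).
  - by move: nB; rewrite (key B B' BF B'F xB xB' Heq).
  - apply/setP => y; case: (eqVneq y x) => [->|ne]; first by rewrite (negbTE xB) (negbTE xB').
    move/setP: Heq => /(_ y); by rewrite !inE ne.
  rewrite -(card_in_imset Hinj).
  apply: subset_leq_card; apply/subsetP => B /imsetP [B' ].
  rewrite inE => /andP [_ HB'] ->; apply/imsetP; by exists B'.
have H1 : #|F1| <= gb n d.
  apply: (IH d A') => //.
    move=> B /imsetP [B' /Hsub B'A ->]; exact: setSD.
  move=> X XA' Xsh; apply: Hvc; first by apply: subset_trans XA' (subsetDl _ _).
  move=> S SX; have [B /imsetP [B' B'F ->] E] := Xsh S SX.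
  exists B' => //; rewrite -E; apply/setP => y; rewrite !inE.
  case: (eqVneq y x) => [->|] //=.
  have : x \notin X by apply/negP => /(subsetP XA'); rewrite !inE eqxx.
  by move/negbTE => ->; rewrite andbF.
have H2 : #|F2| <= (if d is 0 then 0 else gb n d.-1).
  have shx : forall X : {set T}, X \subset A' -> shat F2 X -> #|X|.+1 <= d.
    move=> X XA' Xsh.
    have xX : x \notin X by apply/negP => /(subsetP XA'); rewrite !inE eqxx.
    have := Hvc (x |: X); rewrite cardsU1 xX add1n; apply.
      apply/subsetP => y; rewrite in_setU1 => /orP [/eqP ->|] //.
      by move/(subsetP XA'); rewrite inE => /andP [].
    move=> S SX.
    have SX' : S :\ x \subset X.
      apply/subsetP => y; rewrite !inE => /andP [ne /(subsetP SX)].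
      by rewrite in_setU1 (negbTE ne).
    have [B] := Xsh _ SX'; rewrite inE => /andP [BF /andP [xB xBF]] E.
    case: (boolP (x \in S)) => xS.
    + exists (x |: B) => //; apply/setP => y; rewrite !inE.
      case: (eqVneq y x) => [->|ne] //=.
      move/setP: E => /(_ y); by rewrite !inE ne.
    + exists B => //; apply/setP => y; rewrite !inE.
      case: (eqVneq y x) => [->|ne] /=; first by rewrite (negbTE xB) (negbTE xS).
      move/setP: E => /(_ y); by rewrite !inE ne.
  case: d Hvc H1 shx => [|d] Hvc H1 shx.
    rewrite leqn0 cards_eq0; apply/eqP/setP => B; rewrite [in RHS]inE.
    apply/negbTE/negP => BF2.


    have := shx set0 (sub0set _); rewrite cards0 => H; suff: shat F2 set0 by move/H.
    move=> S; rewrite subset0 => /eqP ->; exists B => //; by rewrite setI0.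
  apply: (IH d A') => //.
    move=> B; rewrite inE => /andP [BF /andP [xB _]].
    apply/subsetP => y yB; rewrite !inE (subsetP (Hsub _ BF) _ yB) andbT.
    by apply/negP => /eqP E; rewrite -E yB in xB.
apply: leq_trans HF _; apply: leq_trans (gb_rec n d); exact: leq_add.
Qed.

Theorem mainTheorem2 (T : finType) (e : rel T) (d : nat) (C : {set T}) :
  simple_graph e -> 1 <= d -> twin_free e -> vc_dim_le e d ->
  identifying_code e C ->
  #|T| - 1 <= #|C| ^ d.
Proof.
move=> _ d1 _ Hvc [_ Hinj].
set F := [set cnbh e v :&: C | v in T].
have HT : #|T| = #|F|.
  rewrite card_in_imset // => u v _ _ E; apply/eqP; apply/negPn/negP => ne.
  by move: (Hinj u v ne); rewrite E eqxx.
have := @sauer T #|C| d C F erefl.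
rewrite -HT; case: d d1 Hvc => // d _ Hvc H.
suff : #|T| <= #|C| ^ d.+1 + 1 by lia.
apply: H.
  by move=> B /imsetP [v _ ->]; exact: subsetIr.
move=> X XC Xsh; apply: Hvc => S SX.
have [B /imsetP [v _ ->] E] := Xsh S SX.
exists v; rewrite -E -setIA; congr (_ :&: _).
by apply/esym/setIidPr.
Qed.
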